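(* The smallest number of vertices of an arithmetic sizeable graph is $36$. That is, for $n=9$ there is an arithmetic graph which is sizeable with respect to the partitions $A=A_0\sqcup A_1$, $B=B_0\sqcup B_1$, and for no $n\le 8$ is there such an arithmetic graph.
   Context: A simplicial graph $\Gamma$ is sizeable with respect to partitions $A=A_0\sqcup A_1$, $B=B_0\sqcup B_1$ if it is bipartite on $A$ and $B$, contains no cycle of length $4$, and each induced subgraph $\Gamma(A_s\sqcup B_t)$, $s,t\in\{0,1\}$, is connected. A graph is arithmetic if it is built as follows: the vertices are divided into four sets $A_0,A_1,B_0,B_1$, each of size $n$ and identified with $\mathbb{Z}/n$ (write $a_s^i$, $b_t^i$ for $i\in\mathbb{Z}/n$); there are eight numbers $h_{s,t},k_{s,t}\in\mathbb{Z}/n$ for $s,t\in\{0,1\}$; and the vertex $a_s^i$ is joined by an edge to $b_t^{i+h_{s,t}}$ and to $b_t^{i+k_{s,t}}$, for all $i,s,t$; there are no other edges. Here $A=A_0\sqcup A_1$, $B=B_0\sqcup B_1$. *)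

(* Defs.v *)
From mathcomp Require Import all_boot.
Set Implicit Arguments. Unset Strict Implicit. Unset Printing Implicit Defensive.

Section Graphs.
Variable V : finType.

Definition simplicial (e : rel V) : Prop :=
  irreflexive e /\ symmetric e.

Definition bipartite_on (e : rel V) (A B : {set V}) : Prop :=
  [disjoint A & B] /\ A :|: B = setT /\
  (forall x y, e x y -> (x \in A) && (y \in B) || (x \in B) && (y \in A)).

Definition has_4cycle (e : rel V) : Prop :=
  exists x1 x2 x3 x4 : V,
    [/\ uniq [:: x1; x2; x3; x4],
        e x1 x2, e x2 x3, e x3 x4 & e x4 x1].

Definition induced (e : rel V) (S : {set V}) : rel V :=
  [rel x y | [&& x \in S, y \in S & e x y]].

Definition connected_on (e : rel V) (S : {set V}) : Prop :=
  S != set0 /\ (forall x y, x \in S -> y \in S -> connect (induced e S) x y).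

Definition sizeable (e : rel V) (A0 A1 B0 B1 : {set V}) : Prop :=
  simplicial e /\
  [disjoint A0 & A1] /\ [disjoint B0 & B1] /\
  bipartite_on e (A0 :|: A1) (B0 :|: B1) /\
  ~ has_4cycle e /\
  (forall s t : bool,
     connected_on e ((if s then A1 else A0) :|: (if t then B1 else B0))).
End Graphs.

(* Vertex (c, s, i): c = false means a_s^i in A_s, c = true means b_s^i in B_s;
   indices i in 'I_n, representing Z/n (n > 0). *)
Definition Vert (n : nat) : finType := (bool * bool * 'I_n)%type.

Section Arith.
Variable n : nat.
Variables h k : bool -> bool -> 'I_n.

Definition arith_AB (s : bool) (i : 'I_n) (t : bool) (j : 'I_n) : bool :=
  (nat_of_ord j == (i + h s t) %% n) || (nat_of_ord j == (i + k s t) %% n).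

Definition arith_adj : rel (Vert n) :=
  fun x y =>
    match x, y with
    | (false, s, i), (true, t, j) => arith_AB s i t j
    | (true, t, j), (false, s, i) => arith_AB s i t j
    | _, _ => false
    end.

Definition arith_part (c s : bool) : {set Vert n} :=
  [set x : Vert n | (x.1.1 == c) && (x.1.2 == s)].
End Arith.

Definition arith_sizeable (n : nat) (h k : bool -> bool -> 'I_n) : Prop :=
  sizeable (arith_adj h k)
    (arith_part n false false) (arith_part n false true)
    (arith_part n true false) (arith_part n true true).

(* Main.v *)
Require Import Defs.
From mathcomp Require Import all_boot all_order all_algebra.
From mathcomp Require Import ring.
From Stdlib Require Import FunctionalExtensionality.
Set Implicit Arguments. Unset Strict Implicit. Unset Printing Implicit Defensive.
Import GRing.Theory.
Local Open Scope ring_scope.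

Lemma AB_ring m (h k : bool -> bool -> 'I_m.+2) s i t j :
  arith_AB h k s i t j = (j == i + h s t) || (j == i + k s t).
Proof. by []. Qed.

Definition exb (P : bool -> bool) := if P false then true else P true.
Lemma exbP P : exb P -> exists b, P b.
Proof. by rewrite /exb; case E: (P false) => H; eexists; [exact: E|exact: H]. Qed.

Definition ords m : seq 'I_m.+2 := [seq inZp i | i <- iota 0 m.+2].
Definition allo m (P : 'I_m.+2 -> bool) := all P (ords m).
Lemma alloP m P : @allo m P -> forall x, P x.
Proof.
move=> /allP H x; apply: H; apply/mapP; exists (val x).
  by rewrite mem_iota /= add0n ltn_ord.
by apply: val_inj; rewrite /= modn_small.
Qed.

Definition ev m (d : bool -> bool -> 'I_m.+2) (s t eps : bool) : 'I_m.+2 :=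
  if eps then d s t else 0.

Definition Qc m (d : bool -> bool -> 'I_m.+2) (c : 'I_m.+2) : bool :=
 exb (fun s => exb (fun t => exb (fun s' => exb (fun t' => exb (fun e1 => exb (fun e2 =>
  exb (fun e3 => exb (fun e4 =>
   [&& (if (s != s') && (t != t') then (if s == t then c else - c) else 0)
        + ev d s t e1 - ev d s' t e2 + ev d s' t' e3 - ev d s t' e4 == 0,
       (s != s') || (ev d s t e1 != ev d s t e2) &
       (t != t') || (ev d s t e1 != ev d s t e4)])))))))).

Definition good m (d : bool -> bool -> 'I_m.+2) c :=
  [|| ~~ coprime (d false false) m.+2, ~~ coprime (d false true) m.+2,
      ~~ coprime (d true false) m.+2, ~~ coprime (d true true) m.+2 | Qc d c].


Definition addm n (x y : nat) := ((x + y) %% n)%N.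
Definition oppm n (x : nat) := ((n - x) %% n)%N.
Definition subm n x y := addm n x (oppm n y).
Definition evn (d : bool -> bool -> nat) (s t eps : bool) : nat :=
  if eps then d s t else 0%N.
Definition Qcn n (d : bool -> bool -> nat) (c : nat) : bool :=
 exb (fun s => exb (fun t => exb (fun s' => exb (fun t' => exb (fun e1 => exb (fun e2 =>
  exb (fun e3 => exb (fun e4 =>
   [&& subm n (addm n (subm n (addm n (if (s != s') && (t != t') then (if s == t then c else oppm n c) else 0%N)
        (evn d s t e1)) (evn d s' t e2)) (evn d s' t' e3)) (evn d s t' e4) == 0%N,
       (s != s') || (evn d s t e1 != evn d s t e2) &
       (t != t') || (evn d s t e1 != evn d s t e4)])))))))).

Lemma Qc_bridge m d c : Qcn m.+2 (fun s t => val (d s t)) (val c) = @Qc m d c.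
Proof. by []. Qed.

Definition goodn n (d : bool -> bool -> nat) c :=
  if coprime (d false false) n then if coprime (d false true) n then
  if coprime (d true false) n then if coprime (d true true) n then Qcn n d c
  else true else true else true else true.
Definition mkdn (a b c e : nat) : bool -> bool -> nat :=
  fun s t => if s then (if t then e else c) else (if t then b else a).
Definition alln n (P : nat -> bool) := all P (iota 0 n).
Definition enumn n := alln n (fun a => alln n (fun b => alln n (fun c => alln n (fun e => alln n (fun x =>
   goodn n (mkdn a b c e) x))))).

Definition Ev m (h k : bool -> bool -> 'I_m.+2) s t (e : bool) := if e then k s t else h s t.

Lemma ABE m (h k : bool -> bool -> 'I_m.+2) s i t j e :
  j = i + Ev h k s t e -> arith_AB h k s i t j.
Proof. by move=> ->; rewrite AB_ring /Ev; case: e; rewrite eqxx ?orbT. Qed.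

Lemma cyc m (h k : bool -> bool -> 'I_m.+2) :
  Qc (fun s t => k s t - h s t)
     (h false false - h true false + h true true - h false true) ->
  has_4cycle (arith_adj h k).
Proof.
set d := fun s t => _; set c := _ - _.
move/exbP=> [s]; move/exbP=> [t]; move/exbP=> [s']; move/exbP=> [t'].
move/exbP=> [e1]; move/exbP=> [e2]; move/exbP=> [e3]; move/exbP=> [e4].
case/and3P=> /eqP Heq H1 H2.
have EE : forall s t e, Ev h k s t e = h s t + ev d s t e.
  by move=> ? ? []; rewrite /Ev /ev /d ?addr0 // addrC subrK.
have Hh : h s t - h s' t + h s' t' - h s t' =
   (if (s != s') && (t != t') then (if s == t then c else - c) else 0).
  by rewrite /c; clear; move: s t s' t'; do 4 case => /=; ring.
have Key : Ev h k s t e1 - Ev h k s' t e2 + Ev h k s' t' e3 = Ev h k s t' e4.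
  apply/eqP; rewrite -subr_eq0.
  have -> : Ev h k s t e1 - Ev h k s' t e2 + Ev h k s' t' e3 - Ev h k s t' e4 =
     (h s t - h s' t + h s' t' - h s t') + (ev d s t e1 - ev d s' t e2 + ev d s' t' e3 - ev d s t' e4).
    by rewrite !EE; ring.
  by rewrite Hh !addrA Heq.
exists (false, s, 0), (true, t, Ev h k s t e1),
   (false, s', Ev h k s t e1 - Ev h k s' t e2), (true, t', Ev h k s t' e4).
split.
- rewrite /= !inE !xpair_eqE /= orbF andbT.
  apply/andP; split.
    move: H1; case: (eqVneq s s') => [<-|//] /=.
    rewrite [0 == _]eq_sym subr_eq0 !EE.
    apply: contra => /eqP E. apply/eqP. exact: (addrI _ E).
  move: H2; case: (eqVneq t t') => [<-|//] /=.
  rewrite !EE. apply: contra => /eqP E. apply/eqP. exact: (addrI _ E).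
- by apply: (ABE (e := e1)); rewrite add0r.
- by apply: (ABE (e := e2)); rewrite subrK.
- by apply: (ABE (e := e3)); rewrite Key.
- by apply: (ABE (e := e4)); rewrite add0r.
Qed.

Lemma conn_inv (T : finType) (e : rel T) (f : T -> nat) :
  (forall x y, e x y -> f x = f y) -> forall x y, connect e x y -> f x = f y.
Proof.
move=> H x y /connectP [p]; elim: p x => [|z p IH] x /=; first by move=> _ ->.
by case/andP=> exz pz ey; rewrite (H _ _ exz); exact: IH pz ey.
Qed.

Definition fv m (a : 'I_m.+2) (g : nat) (x : Vert m.+2) : nat :=
  let: (c, _, i) := x in if c then (val (i - a)%R %% g)%N else (val i %% g)%N.

Arguments fv : simpl never.

Lemma disc m (h k : bool -> bool -> 'I_m.+2) s t :
  ~~ coprime (val (k s t - h s t)) m.+2 ->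
  ~ connected_on (arith_adj h k) (arith_part m.+2 false s :|: arith_part m.+2 true t).
Proof.
move=> ncop [_ Hc].
set g := gcdn (val (k s t - h s t)) m.+2.
have g1 : (1 < g)%N.
  have : (0 < g)%N by rewrite gcdn_gt0 orbT.
  by move: ncop; rewrite /coprime -/g; case: g => [|[|]].
have gd : (g %| val (k s t - h s t)%R)%N by apply: dvdn_gcdl.
have gn : (g %| m.+2)%N by apply: dvdn_gcdr.
pose f := fv (h s t) g.
have key : forall i : 'I_m.+2, (val (i + (k s t - h s t))%R %% g = val i %% g)%N.
  move=> i; have -> : val (i + (k s t - h s t))%R = ((val i + val (k s t - h s t)%R) %% m.+2)%N by [].
  by rewrite (modn_dvdm _ gn) -modnDmr (eqP gd) addn0.
have inv : forall x y, induced (arith_adj h k)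
     (arith_part m.+2 false s :|: arith_part m.+2 true t) x y -> f x = f y.
  move=> [[c1 s1] i] [[c2 s2] j]; rewrite /induced /= !inE /f.
  case: c1; case: c2; rewrite /= ?andbF //.
    rewrite orbF; case/and3P=> /eqP -> /eqP ->; rewrite AB_ring /fv.
    case/orP=> /eqP ->; first by rewrite addrK.
    by rewrite -addrA key.
  rewrite orbF; case/and3P=> /eqP -> /eqP ->; rewrite AB_ring /fv.
  case/orP=> /eqP ->; first by rewrite addrK.
  by rewrite -addrA key.
have m0 : forall i : 'I_m.+2, (false, s, i) \in arith_part m.+2 false s :|: arith_part m.+2 true t.
  by move=> i; rewrite !inE /= eqxx.
have := conn_inv inv (Hc _ _ (m0 0) (m0 1)).
by rewrite /f /fv /= mod0n !modn_small.
Qed.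

Lemma alln_use n P : alln n P -> forall x, (x < n)%N -> P x.
Proof. by move=> /allP H x xn; apply: H; rewrite mem_iota add0n. Qed.

Lemma no_m m (h k : bool -> bool -> 'I_m.+2) : enumn m.+2 -> ~ arith_sizeable h k.
Proof.
move=> E [_ [_ [_ [_ [nc Hc]]]]].
set d := fun s t => k s t - h s t.
have G : goodn m.+2 (fun s t => val (d s t))
   (val (h false false - h true false + h true true - h false true)).
  have := alln_use E (ltn_ord (d false false)).
  move/alln_use/(_ _ (ltn_ord (d false true))).
  move/alln_use/(_ _ (ltn_ord (d true false))).
  move/alln_use/(_ _ (ltn_ord (d true true))).
  move/alln_use/(_ _ (ltn_ord (h false false - h true false + h true true - h false true))).
  have -> // : mkdn (val (d false false)) (val (d false true)) (val (d true false))
     (val (d true true)) = fun s t => val (d s t).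
  by apply: functional_extensionality => s; apply: functional_extensionality => t;
     case: s; case: t.
move: G; rewrite /goodn.
case: ifP => [_|/negbT/disc H _]; last exact: H (Hc false false).
case: ifP => [_|/negbT/disc H _]; last exact: H (Hc false true).
case: ifP => [_|/negbT/disc H _]; last exact: H (Hc true false).
case: ifP => [_|/negbT/disc H _]; last exact: H (Hc true true).
by rewrite Qc_bridge => /cyc.
Qed.

Lemma enums m : (m <= 6)%N -> enumn m.+2.
Proof.
do 7 (case: m => [_|m]; first by vm_compute).
by [].
Qed.

Lemma no_1 (h k : bool -> bool -> 'I_1) : ~ arith_sizeable h k.
Proof.
move=> [_ [_ [_ [_ [nc _]]]]]; apply: nc.
exists (false, false, ord0), (true, false, ord0), (false, true, ord0), (true, true, ord0).
by split; rewrite //= /arith_AB !modn1 /= ?orbT.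
Qed.

Lemma mem_ords m (x : 'I_m.+2) : x \in ords m.
Proof.
apply/mapP; exists (val x); first by rewrite mem_iota /= add0n ltn_ord.
by apply: val_inj; rewrite /= modn_small.
Qed.

Definition verts m : seq (Vert m.+2) :=
  [seq (cs, i) | cs <- [:: (false, false); (false, true); (true, false); (true, true)],
                 i <- ords m].

Lemma mem_verts m (x : Vert m.+2) : x \in verts m.
Proof.
case: x => [[c s] i]; apply/allpairsP; exists ((c, s), i); split => //=.
  by case: c; case: s.
exact: mem_ords.
Qed.

Section Fast.
Variables (V : finType) (veq : V -> V -> bool).
Hypothesis veqE : forall x y, veq x y = (x == y).

Fixpoint uniqv (s : seq V) := if s is x :: s' then (if has (veq x) s' then false else uniqv s') else true.
Lemma uniqvE s : uniqv s = uniq s.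
Proof.
elim: s => [|x s IH] //=; rewrite IH.
have -> : has (veq x) s = (x \in s).
  by rewrite -has_pred1; apply: eq_has => y; rewrite veqE eq_sym.
by case: (x \in s).
Qed.

Definition B4 (e : rel V) (vs : seq V) :=
  has (fun x1 => has (fun x2 => if e x1 x2 then has (fun x3 => if e x2 x3 then
     has (fun x4 => if e x3 x4 then (if e x4 x1 then uniqv [:: x1; x2; x3; x4] else false) else false) vs
     else false) vs else false) vs) vs.

Lemma B4P (e : rel V) vs : (forall x, x \in vs) -> has_4cycle e -> B4 e vs.
Proof.
move=> Hv [x1 [x2 [x3 [x4 [u e12 e23 e34 e41]]]]].
apply/hasP; exists x1 => //; apply/hasP; exists x2 => //; rewrite e12.
apply/hasP; exists x3 => //; rewrite e23.
by apply/hasP; exists x4 => //; rewrite e34 e41 uniqvE.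
Qed.

Definition memv (y : V) (s : seq V) := has (veq y) s.
Lemma memvE y s : memv y s = (y \in s).
Proof. by rewrite /memv -has_pred1; apply: eq_has => z; rewrite veqE eq_sym. Qed.

Fixpoint reach (r : rel V) (vs : seq V) (k : nat) (x : V) : seq V :=
  if k is k'.+1 then
    let R := reach r vs k' x in
    R ++ [seq y <- vs | if memv y R then false else has (fun z => r z y) R]
  else [:: x].

Lemma reach_sound (r : rel V) vs k x y :
  y \in reach r vs k x -> connect r x y.
Proof.
elim: k y => [|k IH] y /=; first by rewrite inE => /eqP ->.
rewrite mem_cat => /orP [/IH //|].
rewrite mem_filter => /andP [].
case: (memv y _) => // /hasP [z zR rzy] _.
exact: connect_trans (IH _ zR) (connect1 rzy).
Qed.

Lemma conn_check (e : rel V) (S : {set V}) (P : pred V) (vs : seq V) k x0 :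
 (forall x, x \in vs) -> (forall x, (x \in S) = P x) -> P x0 ->
 all (fun x => if P x then
      let R := reach (fun a b => if P a then (if P b then e a b else false) else false) vs k x in
      all (fun y => if P y then memv y R else true) vs else true) vs ->
 connected_on e S.
Proof.
move=> Hv HS P0 /allP H; split; first by apply/set0Pn; exists x0; rewrite HS.
move=> x y xS yS.
have := H x (Hv x); rewrite -HS xS /= => /allP /(_ y (Hv y)).
rewrite -HS yS /= memvE => /reach_sound.
have Eq : (fun a b => if P a then (if P b then e a b else false) else false) =2 induced e S.
  by move=> a b; rewrite /induced /= !HS; case: (P a); case: (P b).
by rewrite (eq_connect Eq).
Qed.
End Fast.

Definition beq (a b : bool) := if a then b else ~~ b.
Definition veq n (x y : Vert n) :=
  if beq x.1.1 y.1.1 then (if beq x.1.2 y.1.2 then nat_of_ord x.2 == nat_of_ord y.2 else false) else false.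
Lemma veqE n (x y : Vert n) : veq x y = (x == y).
Proof.
case: x y => [[a b] i] [[c d] j]; rewrite /veq /= !xpair_eqE.
by case: a; case: b; case: c; case: d.
Qed.

Definition h9 (s t : bool) : 'I_9 := if s && t then inZp 5 else inZp 0.
Definition k9 (s t : bool) : 'I_9 :=
  inZp (if s then (if t then 6 else 2) else (if t then 2 else 1)).

Definition inS (s t : bool) (x : Vert 9) :=
  if x.1.1 then beq x.1.2 t else beq x.1.2 s.

Lemma yes9 : arith_sizeable h9 k9.
Proof.
split; first by split; [move=> [[[] s] i] | move=> [[[] s] i] [[[] t] j]].
split; first by rewrite -setI_eq0; apply/eqP/setP => [[[c s] i]]; rewrite !inE /=; case: s; rewrite ?andbF /= ?andbF.
split; first by rewrite -setI_eq0; apply/eqP/setP => [[[c s] i]]; rewrite !inE /=; case: s; rewrite ?andbF /= ?andbF.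
split.
  split; first by rewrite -setI_eq0; apply/eqP/setP => [[[c s] i]]; rewrite !inE /=; case: c; rewrite ?andbF.
  split; first by apply/setP => [[[c s] i]]; rewrite !inE /=; case: c; case: s.
  by move=> [[[] s] i] [[[] t] j]; rewrite !inE /= => // _; case: s; case: t.
split.
  move/(B4P (@veqE 9) (@mem_verts 7)). by vm_compute.
move=> s t; apply: (@conn_check _ _ (@veqE 9) _ _ (inS s t) (verts 7) 9 (false, s, 0)).
- exact: mem_verts.
- move=> [[c s1] i]; rewrite /inS !inE /=; case: s; case: t; rewrite !inE /=;
  by case: c; case: s1.
- by rewrite /inS /=; case: s.
by case: s; case: t; vm_compute.
Qed.

Close Scope ring_scope.

Theorem mainTheorem12 :
  (exists h k : bool -> bool -> 'I_9, arith_sizeable h k) /\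
  (forall n : nat, 0 < n -> n <= 8 ->
     forall h k : bool -> bool -> 'I_n, ~ arith_sizeable h k).
Proof.
split; first by exists h9, k9; exact: yes9.
case=> [//|[_ _|m _ Hm]]; first exact: no_1.
by move=> h k; apply: no_m; apply: enums.
Qed.
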